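(* Let $G=(V,w)$ be a weighted graph and let $Z\in\mathcal{M}(G)$ be a crossless non-star minimum cut with shores $X_0$ and $X_1=V\setminus X_0$. For $b\in\{0,1\}$ let $\mathcal{M}_b=\{S\in\mathcal{M}(G): S\subseteq Z\cup E(X_b)\}$, and let $\{G_0,G_1\}=\mathrm{sep}(G,Z)$. Then for each $b\in\{0,1\}$, $\dim\,\mathrm{span}\{\chi(S): S\in\mathcal{M}_b\}=\mathrm{cdim}(G_b)$.
   Context: A weighted graph $G=(V,w)$ has nonnegative weights on unordered pairs of distinct vertices; its edge set is $E=\{e:w(e)>0\}$. For $X\subseteq V$, $E(X)$ is the set of edges with both endpoints in $X$. For $\emptyset\ne X\subsetneq V$, $\Delta(X)$ is the set of edges with exactly one endpoint in $X$ (a cut with shores $X$, $V\setminus X$). A cut is a star cut if one shore is a single vertex, otherwise non-star. $\mathcal{M}(G)$ is the set of minimum-weight cuts; $\chi(S)$ is the characteristic vector of $S$ indexed by the edges of the graph in question; $\mathrm{cdim}(G)=\dim\,\mathrm{span}\{\chi(S):S\in\mathcal{M}(G)\}$. Sets $X,Y$ cross if $X\cap Y$, $X\setminus Y$, $Y\setminus X$, $V\setminus(X\cup Y)$ are all nonempty; cuts cross if their shores cross. A mincut is crossless if no other mincut crosses it. The separation $\mathrm{sep}(G,Z)$ along a cut $Z$ with shores $X_0,X_1$ is the pair of graphs $G_b=(X_b\cup\{v_{1-b}\},w_b)$, $b\in\{0,1\}$, with new vertices $v_0,v_1$, where $w_b(\{x,y\})=w(\{x,y\})$ for $x,y\in X_b$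 and $w_b(\{x,v_{1-b}\})=\sum_{y\in X_{1-b}}w(\{x,y\})$ for $x\in X_b$. *)

(* Defs.v *)
From HB Require Import structures.
From mathcomp Require Import all_boot all_order all_algebra.
Set Implicit Arguments. Unset Strict Implicit. Unset Printing Implicit Defensive.
Import Order.TTheory GRing.Theory Num.Theory.
Local Open Scope ring_scope.

(* A weighted graph on the finite vertex type V is given by a weight function
   w on subsets of V; only its values on 2-element subsets (unordered pairs of
   distinct vertices) are meaningful. *)
Section WeightedGraph.
Variables (R : realFieldType) (V : finType).
Implicit Types (w : {set V} -> R) (X Y : {set V}) (S T : {set {set V}}).

Definition edges w : {set {set V}} := [set e : {set V} | (#|e| == 2)%N && (0 < w e)].

Definition EX w X : {set {set V}} := [set e in edges w | e \subset X].

Definition delta w X : {set {set V}} := [set e in edges w | #|e :&: X| == 1%N].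

Definition proper_shore X : bool := (X != set0) && (X != setT).

Definition is_cut w S : bool := [exists X : {set V}, proper_shore X && (S == delta w X)].

Definition cut_weight w S : R := \sum_(e in S) w e.

Definition mincuts w : {set {set {set V}}} :=
  [set S | is_cut w S &&
     [forall X : {set V}, proper_shore X ==> (cut_weight w S <= cut_weight w (delta w X))]].

Definition crossing X Y : bool :=
  [&& X :&: Y != set0, X :\: Y != set0, Y :\: X != set0 & ~: (X :|: Y) != set0].

Definition cuts_cross w S T : bool :=
  [exists X : {set V}, exists Y : {set V},
     [&& S == delta w X, T == delta w Y & crossing X Y]].

Definition crossless w Z : bool :=
  (Z \in mincuts w) &&
  [forall S in mincuts w, (S != Z) ==> ~~ cuts_cross w S Z].

Definition star_cut w S : bool :=
  [exists X : {set V}, [&& S == delta w X, proper_shore X &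
                          ((#|X| == 1%N) || (#|~: X| == 1%N))]].

Definition edge_t w := {e : {set V} | e \in edges w}.

Definition chi w S : 'rV[R]_(#|{: edge_t w}|) :=
  \row_(j < #|{: edge_t w}|) ((val (enum_val j) \in S)%:R).

Definition span_dim w (F : {set {set {set V}}}) : nat :=
  \rank (\sum_(S in F) <<chi w S>>)%MS.

Definition cdim w : nat := span_dim w (mincuts w).

(* Separation along the cut with shores X and ~: X: the graph on the vertex set
   X u {new vertex}, the new vertex being [None]. *)
Definition sep_vertex X := option {x : V | x \in X}.

Definition sepw w X (e : {set sep_vertex X}) : R :=
  if None \in e then
    \sum_(x : {x : V | x \in X} | Some x \in e) \sum_(y in ~: X) w [set val x; y]
  else w (val @: [set x : {x : V | x \in X} | Some x \in e]).

End WeightedGraph.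
Arguments sepw {R V} w X e.

(* Main.v *)
Require Import Defs.
From HB Require Import structures.
From mathcomp Require Import all_boot all_order all_algebra.
Import Order.TTheory GRing.Theory Num.Theory.
Local Open Scope ring_scope.
Set Implicit Arguments. Unset Strict Implicit. Unset Printing Implicit Defensive.

Lemma card2I (T : finType) (x y : T) (Y : {set T}) : x != y ->
  #|[set x; y] :&: Y| = ((x \in Y) + (y \in Y))%N.
Proof.
move=> nxy.
case hx: (x \in Y); case hy: (y \in Y).
- have -> : [set x; y] :&: Y = [set x; y].
    by apply/setIidPl/subsetP => z; rewrite !inE => /orP[] /eqP ->.
  by rewrite cards2 nxy.
- have -> : [set x; y] :&: Y = [set x].
    apply/setP => z; rewrite !inE; case: (z =P x) => [->|_]; rewrite ?hx //=.
    by case: (z =P y) => [->|_]; rewrite ?hy.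
  by rewrite cards1.
- have -> : [set x; y] :&: Y = [set y].
    apply/setP => z; rewrite !inE; case: (z =P y) => [->|_]; rewrite ?hy ?orbT //=.
    by case: (z =P x) => [->|_]; rewrite ?hx.
  by rewrite cards1.
- have -> : [set x; y] :&: Y = set0.
    apply/setP => z; rewrite !inE; case: (z =P x) => [->|_]; rewrite ?hx //=.
    by case: (z =P y) => [->|_]; rewrite ?hy.
  by rewrite cards0.
Qed.

Lemma CW (R : realFieldType) (T : finType) (f : {set T} -> R) (Y : {set T}) :
  (forall e : {set T}, #|e| = 2%N -> 0 <= f e) ->
  cut_weight f (delta f Y) = \sum_(x in Y) \sum_(y in ~: Y) f [set x; y].
Proof.
move=> f0.
rewrite /cut_weight.
have -> : \sum_(e in delta f Y) f e =
          \sum_(e in [set e : {set T} | (#|e| == 2%N) && (#|e :&: Y| == 1%N)]) f e.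
  rewrite big_mkcond [RHS]big_mkcond; apply: eq_bigr => e _.
  rewrite /delta /edges !inE.
  case h2: (#|e| == 2%N) => //=; case h1: (#|e :&: Y| == 1%N); rewrite ?andbF //=.
  have he : #|e| = 2%N by apply/eqP.
  by rewrite lt_def f0 // andbT; case: eqP.
have -> : [set e : {set T} | (#|e| == 2%N) && (#|e :&: Y| == 1%N)] =
          [set [set p.1; p.2] | p in setX Y (~: Y)].
  apply/setP => e; rewrite inE; apply/idP/imsetP.
  - case/andP => /cards2P [x [y [nxy ->]]]; rewrite card2I //.
    case hx: (x \in Y); case hy: (y \in Y) => //= _.
    + by exists (x, y); rewrite // inE hx inE hy.
    + by exists (y, x); rewrite ?inE ?hx ?hy // setUC.
  - case=> [[x y]]; rewrite inE /= inE => /andP [hx hy] ->.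
    have nxy : x != y by apply: contraNneq hy => <-.
    by rewrite cards2 nxy card2I // hx (negbTE hy).
rewrite big_imset /=; last first.
  move=> [x1 y1] [x2 y2]; rewrite !inE /= => /andP [hx1 hy1] /andP [hx2 hy2] heq.
  have : x1 \in [set x2; y2] by rewrite -heq !inE eqxx.
  rewrite !inE => /orP [/eqP e1|/eqP e1]; last by rewrite -e1 hx1 in hy2.
  have : y1 \in [set x2; y2] by rewrite -heq !inE eqxx orbT.
  rewrite !inE => /orP [/eqP e2|/eqP e2]; last by rewrite e1 e2.
  by rewrite e2 hx2 in hy1.
rewrite pair_big_dep /=; apply: eq_bigl => -[x y]; rewrite !inE.
by [].
Qed.

Definition pv (V : finType) (X : {set V}) (x : V) : sep_vertex X := insub x.
Definition ext (V : finType) (X : {set V}) (Y' : {set sep_vertex X}) : {set V} :=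
  [set x | pv X x \in Y'].

Lemma pv_Some (V : finType) (X : {set V}) (x : V) (a : {x : V | x \in X}) :
  (pv X x == Some a) = (x == val a).
Proof.
rewrite /pv; case: insubP => [u hx <-|hx].
  by rewrite (inj_eq (@Some_inj _)) -val_eqE.
apply/esym/negbTE; apply: contra hx => /eqP ->; exact: valP.
Qed.

Lemma pv_None (V : finType) (X : {set V}) (x : V) :
  (pv X x == None) = (x \notin X).
Proof. by rewrite /pv; case: insubP => [u hx _|hx] //; rewrite hx. Qed.

Lemma sum_pv_Some (R : realFieldType) (V : finType) (X : {set V}) a (G : V -> R) :
  \sum_(x | pv X x == Some a) G x = G (val a).
Proof. by rewrite (eq_bigl (pred1 (val a))) ?big_pred1_eq // => x; rewrite pv_Some. Qed.

Lemma sum_pv_None (R : realFieldType) (V : finType) (X : {set V}) (G : V -> R) :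
  \sum_(x | pv X x == None) G x = \sum_(x in ~: X) G x.
Proof. by apply: eq_bigl => x; rewrite pv_None inE. Qed.

Lemma sepw_SS (R : realFieldType) (V : finType) (w : {set V} -> R) (X : {set V}) a c :
  sepw w X [set Some a; Some c] = w [set val a; val c].
Proof.
rewrite /sepw !inE /=.
have -> : [set x : {x : V | x \in X} | Some x \in [set Some a; Some c]] = [set a; c].
  by apply/setP => x; rewrite !inE.
by rewrite imsetU1 imset_set1.
Qed.

Lemma sepw_NS (R : realFieldType) (V : finType) (w : {set V} -> R) (X : {set V}) c :
  sepw w X [set None; Some c] = \sum_(y in ~: X) w [set val c; y].
Proof.
rewrite /sepw !inE eqxx /=.
rewrite (eq_bigl (pred1 c)) ?big_pred1_eq // => x; by rewrite !inE.
Qed.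

Lemma sepw_SN (R : realFieldType) (V : finType) (w : {set V} -> R) (X : {set V}) c :
  sepw w X [set Some c; None] = \sum_(y in ~: X) w [set val c; y].
Proof. by rewrite setUC sepw_NS. Qed.

Lemma fiber (R : realFieldType) (V : finType) (w : {set V} -> R) (X : {set V}) u v :
  u != v ->
  \sum_(x | pv X x == u) \sum_(y | pv X y == v) w [set x; y] = sepw w X [set u; v].
Proof.
case: u => [a|]; case: v => [c|] // _.
- by rewrite sum_pv_Some sum_pv_Some sepw_SS.
- by rewrite sum_pv_Some sum_pv_None sepw_SN.
- rewrite sum_pv_None sepw_NS; apply: eq_bigr => x _.
  by rewrite sum_pv_Some setUC.
Qed.

Lemma sepw_ge0 (R : realFieldType) (V : finType) (w : {set V} -> R) (X : {set V}) :
  (forall e : {set V}, #|e| = 2%N -> 0 <= w e) ->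
  forall e : {set sep_vertex X}, #|e| = 2%N -> 0 <= sepw w X e.
Proof.
move=> w0 e /eqP /cards2P [u [v [nuv ->]]].
rewrite -fiber //; apply: sumr_ge0 => x /eqP hx; apply: sumr_ge0 => y /eqP hy.
apply: w0; rewrite cards2; have -> // : x != y.
by apply: contraNneq nuv => exy; rewrite -hx -hy exy.
Qed.

Lemma double_part (R : realFieldType) (V : finType) (X : {set V}) (Y' : {set sep_vertex X})
   (F : V -> V -> R) :
  \sum_(x in ext Y') \sum_(y in ~: ext Y') F x y =
  \sum_(u in Y') \sum_(v in ~: Y') \sum_(x | pv X x == u) \sum_(y | pv X y == v) F x y.
Proof.
rewrite (partition_big (pv X) (mem Y')) /=; last by move=> x; rewrite inE.
apply: eq_bigr => u hu.
rewrite (eq_bigl (fun x => pv X x == u)); last first.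
  by move=> x; rewrite inE; case: (pv X x =P u) => [->|]; rewrite ?andbF ?hu.
rewrite exchange_big /=.
rewrite (partition_big (pv X) (mem (~: Y'))) /=; last by move=> x; rewrite !inE.
apply: eq_bigr => v hv.
rewrite exchange_big /=; apply: eq_bigr => x _.
apply: eq_bigl => y; rewrite !inE; case: (pv X y =P v) => [->|]; rewrite ?andbF //.
by rewrite inE in hv; rewrite hv.
Qed.

Lemma weight_eq (R : realFieldType) (V : finType) (w : {set V} -> R) (X : {set V})
    (Y' : {set sep_vertex X}) :
  (forall e : {set V}, #|e| = 2%N -> 0 <= w e) ->
  cut_weight (sepw w X) (delta (sepw w X) Y') = cut_weight w (delta w (ext Y')).
Proof.
move=> w0; rewrite (@CW _ _ (sepw w X) Y'); last exact: sepw_ge0.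
rewrite (@CW _ _ w (ext Y')) //.
rewrite (double_part Y' (fun x y => w [set x; y])); apply: eq_bigr => u hu; apply: eq_bigr => v hv.
rewrite fiber //; apply: contraTneq hu => ->; by rewrite inE in hv.
Qed.

Lemma w_pair_ge0 (R : realFieldType) (V : finType) (w : {set V} -> R) (X : {set V}) u v x y :
  (forall e : {set V}, #|e| = 2%N -> 0 <= w e) ->
  u != v -> pv X x == u -> pv X y == v -> 0 <= w [set x; y].
Proof.
move=> w0 nuv /eqP hx /eqP hy; apply: w0; rewrite cards2; have -> // : x != y.
by apply: contraNneq nuv => exy; rewrite -hx -hy exy.
Qed.

Lemma sepw_pos (R : realFieldType) (V : finType) (w : {set V} -> R) (X : {set V}) x y :
  (forall e : {set V}, #|e| = 2%N -> 0 <= w e) ->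
  0 < w [set x; y] -> pv X x != pv X y -> 0 < sepw w X [set pv X x; pv X y].
Proof.
move=> w0 wp nxy; rewrite -fiber //.
rewrite (bigD1 x) ?eqxx //= (bigD1 y) ?eqxx //=.
apply: (lt_le_trans wp); rewrite -addrA lerDl; apply: addr_ge0.
  by apply: sumr_ge0 => y' /andP [hy' _]; apply: (w_pair_ge0 w0 nxy).
apply: sumr_ge0 => x' /andP [hx' _]; apply: sumr_ge0 => y' hy'.
exact: (w_pair_ge0 w0 nxy).
Qed.

Lemma mem_eq (R : realFieldType) (V : finType) (w : {set V} -> R) (X : {set V})
    (Y' : {set sep_vertex X}) e :
  (forall e : {set V}, #|e| = 2%N -> 0 <= w e) ->
  e \in edges w ->
  (e \in delta w (ext Y')) = (pv X @: e \in delta (sepw w X) Y').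
Proof.
move=> w0 he; have he' := he; rewrite /edges inE in he'.
case/andP: he' => /cards2P [x [y [nxy exy]]] wp; rewrite exy in wp.
rewrite /delta inE he /= inE exy imsetU1 imset_set1 card2I // /edges !inE.
case: (boolP (pv X x == pv X y)) => [/eqP ->|npv].
  rewrite setUid cards1 /=; by case: (pv X y \in Y').
rewrite cards2 npv sepw_pos // card2I //.
Qed.


Definition Mx (R : realFieldType) (V : finType) (w : {set V} -> R) (X : {set V}) :
  'M[R]_(#|{: edge_t (sepw w X)}|, #|{: edge_t w}|) :=
  \matrix_(i < #|{: edge_t (sepw w X)}|, j < #|{: edge_t w}|) ((pv X @: val (enum_val j) == val (enum_val i))%:R).

Lemma chi_Mx (R : realFieldType) (V : finType) (w : {set V} -> R) (X : {set V})
   (S : {set {set V}}) (S' : {set {set sep_vertex X}}) :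
  (forall e, e \in edges w -> (e \in S) = (pv X @: e \in S')) ->
  S' \subset edges (sepw w X) ->
  chi w S = chi (sepw w X) S' *m Mx w X.
Proof.
move=> hS hS'; apply/rowP => j; rewrite !mxE.
set e := val (enum_val j).
have he : e \in edges w by exact: valP.
rewrite hS //.
case: (boolP (pv X @: e \in edges (sepw w X))) => hb.
  pose k0 : edge_t (sepw w X) := Sub (pv X @: e) hb.
  rewrite (bigD1 (enum_rank k0)) //= big1 ?addr0.
    by rewrite !mxE enum_rankK /= eqxx mulr1.
  move=> i ni; rewrite !mxE; case: eqP => [hi|]; last by rewrite mulr0.
  suff : i == enum_rank k0 by rewrite (negbTE ni).
  apply/eqP; rewrite -[i]enum_valK; congr enum_rank; apply: val_inj; by rewrite /= hi.
have -> : (pv X @: e \in S') = false.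
  by apply: negbTE; apply: contra hb; apply: (subsetP hS').
rewrite big1 // => i _; rewrite !mxE; case: eqP => [hi|]; last by rewrite mulr0.
by move: hb; rewrite hi (valP (enum_val i)).
Qed.

Lemma Mx_surj (R : realFieldType) (V : finType) (w : {set V} -> R) (X : {set V})
   (i : 'I_#|{: edge_t (sepw w X)}|) :
  (forall e : {set V}, #|e| = 2%N -> 0 <= w e) ->
  exists j : 'I_#|{: edge_t w}|, pv X @: val (enum_val j) == val (enum_val i).
Proof.
move=> w0.
case: (enum_val i) => ke /=; rewrite /edges inE => /andP [/cards2P [u [v [nuv huv]]]].
rewrite huv -fiber // => hpos.
have hne : \sum_(x | pv X x == u) \sum_(y | pv X y == v) w [set x; y] <> 0.
  by move=> h; move: hpos; rewrite h ltxx.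
have := psumr_neq0P _ hne => -[].
  move=> x hx; apply: sumr_ge0 => y hy; exact: (w_pair_ge0 w0 nuv).
move=> x /andP [hx hpos2].
have hne2 : \sum_(y | pv X y == v) w [set x; y] <> 0.
  by move=> h; move: hpos2; rewrite h ltxx.
have := psumr_neq0P _ hne2 => -[].
  move=> y hy; exact: (w_pair_ge0 w0 nuv).
move=> y /andP [hy wp].
have nxy : x != y by apply: contraNneq nuv => exy; rewrite -(eqP hx) -(eqP hy) exy.
have he : [set x; y] \in edges w by rewrite /edges inE cards2 nxy wp.
exists (enum_rank (Sub [set x; y] he : edge_t w)).
by rewrite enum_rankK /= imsetU1 imset_set1 (eqP hx) (eqP hy).
Qed.

Lemma Mx_free (R : realFieldType) (V : finType) (w : {set V} -> R) (X : {set V}) :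
  (forall e : {set V}, #|e| = 2%N -> 0 <= w e) ->
  row_free (Mx w X).
Proof.
move=> w0; apply/row_freeP.
pose sel (i : 'I_#|{: edge_t (sepw w X)}|) := xchoose (@Mx_surj _ _ w X i w0).
exists (\matrix_(j < #|{: edge_t w}|, i < #|{: edge_t (sepw w X)}|) (j == sel i)%:R).
apply/matrixP => i i'; rewrite !mxE.
rewrite (bigD1 (sel i')) //= big1 ?addr0 => [|j nj]; last by rewrite !mxE (negbTE nj) mulr0.
rewrite !mxE eqxx mulr1 (eqP (xchooseP (@Mx_surj _ _ w X i' w0))) val_eqE.
by rewrite (inj_eq enum_val_inj) eq_sym.
Qed.


Lemma edge2 (R : realFieldType) (V : finType) (w : {set V} -> R) e :
  e \in edges w -> exists x y, [/\ x != y, e = [set x; y] & 0 < w e].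
Proof.
rewrite /edges inE => /andP [/cards2P [x [y [nxy ->]]] wp]; by exists x, y.
Qed.

Lemma delta_sub (R : realFieldType) (V : finType) (w : {set V} -> R) X :
  delta w X \subset edges w.
Proof. by apply/subsetP => e; rewrite inE => /andP []. Qed.

Lemma mem_delta2 (R : realFieldType) (V : finType) (w : {set V} -> R) X x y :
  x != y -> [set x; y] \in edges w ->
  ([set x; y] \in delta w X) = ((x \in X) != (y \in X)).
Proof.
move=> nxy he; rewrite inE he /= card2I //.
by case: (x \in X); case: (y \in X).
Qed.

Lemma deltaC (R : realFieldType) (V : finType) (w : {set V} -> R) X :
  delta w (~: X) = delta w X.
Proof.
apply/setP => e; case he: (e \in edges w); last first.
  by rewrite /delta inE he [in RHS]inE he.
have [x [y [nxy exy _]]] := edge2 he; rewrite exy in he *.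
rewrite !mem_delta2 // !inE; by case: (x \in X); case: (y \in X).
Qed.

Lemma ext0 (V : finType) (X : {set V}) : ext (set0 : {set sep_vertex X}) = set0.
Proof. by apply/setP => x; rewrite !inE. Qed.

Lemma extT (V : finType) (X : {set V}) : ext (setT : {set sep_vertex X}) = setT.
Proof. by apply/setP => x; rewrite !inE. Qed.

Lemma ext_None (V : finType) (X : {set V}) : ext [set (None : sep_vertex X)] = ~: X.
Proof. by apply/setP => x; rewrite !inE pv_None. Qed.

Lemma pv_surj (V : finType) (X : {set V}) (u : sep_vertex X) :
  ~: X != set0 -> exists x, pv X x = u.
Proof.
move=> hX; case: u => [a|].
  by exists (val a); apply/eqP; rewrite pv_Some.
case/set0Pn: hX => y hy; exists y; apply/eqP; by rewrite pv_None -in_setC.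
Qed.

Lemma ext_proper (V : finType) (X : {set V}) (Y' : {set sep_vertex X}) :
  ~: X != set0 -> proper_shore Y' -> proper_shore (ext Y').
Proof.
move=> hX /andP [h0 hT]; apply/andP; split.
  case/set0Pn: h0 => u hu; have [x hx] := pv_surj u hX.
  by apply/set0Pn; exists x; rewrite inE hx.
have : ~: Y' != set0 by apply: contra hT => /eqP h; rewrite -[Y']setCK h setC0.
case/set0Pn => u hu; have [x hx] := pv_surj u hX.
apply/eqP => hE.
have : x \in ext Y' by rewrite hE inE.
by rewrite inE hx; rewrite inE in hu; move=> h; rewrite h in hu.
Qed.

Lemma proper_of_ext (V : finType) (X : {set V}) (Y' : {set sep_vertex X}) :
  proper_shore (ext Y') -> proper_shore Y'.
Proof.
case/andP => h0 hT; apply/andP; split.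
  by apply: contraNneq h0 => ->; rewrite ext0.
by apply: contraNneq hT => ->; rewrite extT.
Qed.

Lemma pv_eq (V : finType) (X : {set V}) x y :
  x \in X -> pv X y = pv X x -> y = x.
Proof.
move=> hx.
have ha : pv X x = Some (Sub x hx : {x : V | x \in X}) by apply/eqP; rewrite pv_Some.
by rewrite ha => /eqP; rewrite pv_Some => /eqP.
Qed.

Lemma ext_pv (V : finType) (X Y : {set V}) :
  (Y \subset X) || (~: X \subset Y) -> ext (pv X @: Y) = Y.
Proof.
move=> hY; apply/setP => x; rewrite inE; apply/imsetP/idP; last first.
  by move=> hx; exists x.
case=> y hy hxy.
case: (boolP (x \in X)) => hx.
  by rewrite -(pv_eq hx (esym hxy)).
have : pv X y == None by rewrite -hxy pv_None.
rewrite pv_None => hy'.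
case/orP: hY => hY.
  by move: hy' => /negP; case; apply: (subsetP hY).
by apply: (subsetP hY); rewrite inE.
Qed.


Lemma mincut_le (R : realFieldType) (V : finType) (w : {set V} -> R) S X :
  S \in mincuts w -> proper_shore X -> cut_weight w S <= cut_weight w (delta w X).
Proof. by rewrite inE => /andP [_ /forallP h] hX; have := h X; rewrite hX. Qed.

Lemma mincut_shore (R : realFieldType) (V : finType) (w : {set V} -> R) S :
  S \in mincuts w -> exists Y, proper_shore Y /\ S = delta w Y.
Proof.
by rewrite inE => /andP [/existsP [Y /andP [hY /eqP ->]] _]; exists Y.
Qed.

Lemma sub_mincut_eq (R : realFieldType) (V : finType) (w : {set V} -> R) S Z :
  S \in mincuts w -> Z \in mincuts w -> S \subset Z -> S = Z.
Proof.
move=> hS hZ hsub.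
have [Y [hY eS]] := mincut_shore hS; have [X [hX eZ]] := mincut_shore hZ.
have le1 : cut_weight w Z <= cut_weight w S by rewrite [in X in _ <= X]eS; apply: mincut_le.
have le2 : cut_weight w S <= cut_weight w Z by rewrite [in X in _ <= X]eZ; apply: mincut_le.
have hZS : \sum_(e in Z :\: S) w e = 0.
  have := le_anti (andb_true_intro (conj le1 le2)); rewrite /cut_weight.
  rewrite (big_setID S) /= (setIidPr hsub).
  by move/(congr1 (fun t => t - \sum_(i in S) w i)); rewrite /= addrAC subrr add0r.
apply/eqP; rewrite eqEsubset hsub /=; apply/subsetP => e he.
apply/negPn/negP => heS.
have hpos : 0 < w e.
  have : e \in edges w by rewrite eZ in he; apply: (subsetP (delta_sub w X)).
  by rewrite /edges inE => /andP [].
have : w e = 0.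
  apply: (psumr_eq0P _ hZS); last by rewrite inE heS.
  move=> e' /setDP [he' _]; apply: ltW.
  have : e' \in edges w by rewrite eZ in he'; apply: (subsetP (delta_sub w X)).
  by rewrite /edges inE => /andP [].
by move=> h; rewrite h ltxx in hpos.
Qed.


Unset Implicit Arguments.

Lemma chi_ext (R : realFieldType) (V : finType) (w : {set V} -> R) (X : {set V})
   (Y' : {set sep_vertex X}) :
  (forall e : {set V}, #|e| = 2%N -> 0 <= w e) ->
  chi w (delta w (ext Y')) = chi (sepw w X) (delta (sepw w X) Y') *m Mx w X.
Proof.
move=> w0; apply: chi_Mx; last exact: delta_sub.
by move=> e he; apply: mem_eq.
Qed.

Theorem lemma13 (R : realFieldType) (V : finType) (w : {set V} -> R)
    (X0 : {set V}) :
  (forall e : {set V}, #|e| = 2%N -> 0 <= w e) ->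
  proper_shore X0 ->
  delta w X0 \in mincuts w ->
  crossless w (delta w X0) ->
  ~~ star_cut w (delta w X0) ->
  forall b : bool,
    let Xb := if b then ~: X0 else X0 in
    span_dim w [set S in mincuts w | S \subset delta w X0 :|: EX w Xb]
    = cdim (sepw w Xb).
Proof.
move=> w0 hX0 hZ hcl _ b Xb.
set Z := delta w X0.
have hZb : delta w Xb = Z by rewrite /Xb; case: ifP => _ //; rewrite deltaC.
have [hXb0 hYb0] : Xb != set0 /\ ~: Xb != set0.
  case/andP: hX0 => h1 h2; rewrite /Xb; case: ifP => _; rewrite ?setCK; split => //;
  by apply: contra h2 => /eqP h; rewrite -[X0]setCK h setC0.
set wb := sepw w Xb.
have hNone : proper_shore [set (None : sep_vertex Xb)].
  apply/andP; split; first by apply/set0Pn; exists None; rewrite inE.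
  case/set0Pn: hXb0 => x hx; apply/eqP => h.
  have : Some (Sub x hx : {x : V | x \in Xb}) \in [set (None : sep_vertex Xb)] by rewrite h inE.
  by rewrite inE.
have wNone : cut_weight wb (delta wb [set None]) = cut_weight w Z.
  by rewrite /wb weight_eq // ext_None deltaC hZb.
have hA : forall S', S' \in mincuts wb -> exists Y' : {set sep_vertex Xb},
    S' = delta wb Y' /\
    delta w (ext Y') \in [set S in mincuts w | S \subset Z :|: EX w Xb].
  move=> S' hS'; have [Y' [hY' eS']] := mincut_shore hS'; exists Y'; split => //.
  rewrite inE; apply/andP; split.
    rewrite inE; apply/andP; split.
      by apply/existsP; exists (ext Y'); rewrite ext_proper // eqxx.
    apply/forallP => X; apply/implyP => hX.
    rewrite -weight_eq // -eS'.
    apply: (le_trans (mincut_le hS' hNone)); rewrite wNone.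
    exact: mincut_le.
  apply/subsetP => e he.
  have hee : e \in edges w by apply: (subsetP (delta_sub w _)) he.
  have [x [y [nxy exy _]]] := edge2 hee; rewrite exy in he hee *.
  rewrite mem_delta2 // !inE in he.
  rewrite inE -hZb mem_delta2 //.
  case hx: (x \in Xb); case hy: (y \in Xb) => //=.
    by rewrite /EX inE hee; apply/subsetP => z; rewrite !inE => /orP [] /eqP ->.
  have ex : pv Xb x = None by apply/eqP; rewrite pv_None hx.
  have ey : pv Xb y = None by apply/eqP; rewrite pv_None hy.
  by move: he; rewrite ex ey eqxx.
have hB : forall S, S \in [set S in mincuts w | S \subset Z :|: EX w Xb] ->
    exists Y' : {set sep_vertex Xb}, delta wb Y' \in mincuts wb /\ S = delta w (ext Y').
  move=> S; rewrite inE => /andP [hS hsub].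
  have [Y0 [hY0 eS good]] : exists Y0, [/\ proper_shore Y0, S = delta w Y0 &
       (Y0 \subset Xb) || (~: Xb \subset Y0)].
    case: (eqVneq S Z) => [eSZ|nSZ].
      exists (~: Xb); split; rewrite ?subxx ?orbT //; last by rewrite deltaC hZb.
      by apply/andP; split => //; apply: contra hXb0 => /eqP h; rewrite -[Xb]setCK h setCT.
    have [Y [hY eS]] := mincut_shore hS.
    have ncr : ~~ crossing Y Xb.
      case/andP: hcl => _ /forallP /(_ S); rewrite hS nSZ /= => hnc.
      apply: contra hnc => hc; apply/existsP; exists Y; apply/existsP; exists Xb.
      by rewrite eS eqxx hZb eqxx hc.
    have bad : (forall x y, x \in Xb -> y \in Xb -> (x \in Y) = (y \in Y)) -> S = Z.
      move=> hxy; apply: (sub_mincut_eq hS hZ).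
      apply/subsetP => e he; have := subsetP hsub e he; rewrite inE => /orP [] // hEX.
      rewrite /EX inE in hEX; case/andP: hEX => hee hsubX.
      have [x [y [nxy exy _]]] := edge2 hee; rewrite exy in he hee hsubX.
      have hx : x \in Xb by apply: (subsetP hsubX); rewrite !inE eqxx.
      have hy : y \in Xb by apply: (subsetP hsubX); rewrite !inE eqxx orbT.
      by move: he; rewrite eS mem_delta2 // (hxy x y hx hy) eqxx.
    move: ncr; rewrite /crossing !negb_and !negbK.
    case/or4P => hc.
    - suff eSZ : S = Z by rewrite eSZ eqxx in nSZ.
      apply: bad => x y hx hy.
      have hx' : x \notin Y by apply: contraTN hc => hxY; apply/set0Pn; exists x; rewrite inE hxY.
      have hy' : y \notin Y by apply: contraTN hc => hyY; apply/set0Pn; exists y; rewrite inE hyY.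
      by rewrite (negbTE hx') (negbTE hy').
    - exists Y; split => //; by rewrite -setD_eq0 hc.
    - suff eSZ : S = Z by rewrite eSZ eqxx in nSZ.
      apply: bad => x y hx hy.
      have hx' : x \in Y by apply: contraTT hc => hxY; apply/set0Pn; exists x; rewrite inE hxY.
      have hy' : y \in Y by apply: contraTT hc => hyY; apply/set0Pn; exists y; rewrite inE hyY.
      by rewrite hx' hy'.
    - exists Y; split => //; apply/orP; right; apply/subsetP => x hx.
      apply: contraTT hc => hxY; apply/set0Pn; exists x; by rewrite !inE negb_or hxY -in_setC hx.
  have eY : ext (pv Xb @: Y0) = Y0 by apply: ext_pv.
  exists (pv Xb @: Y0); split; last by rewrite eY.
  have hY' : proper_shore (pv Xb @: Y0) by apply: proper_of_ext; rewrite eY.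
  rewrite inE; apply/andP; split.
    by apply/existsP; exists (pv Xb @: Y0); rewrite hY' eqxx.
  apply/forallP => X'; apply/implyP => hX'.
  rewrite /wb !weight_eq // eY -eS; apply: mincut_le => //; exact: ext_proper.
rewrite /span_dim /cdim /span_dim.
rewrite -(mxrankMfree _ (Mx_free Xb w0)).
apply/eqmx_rank/andP; split.
  apply/sumsmx_subP => S hS; rewrite genmxE.
  have [Y' [hY' ->]] := hB S hS.
  rewrite chi_ext //; apply: submxMr.
  by apply: (sumsmx_sup (delta wb Y')) => //; rewrite genmxE.
rewrite sumsmxMr_gen; apply/sumsmx_subP => S' hS'; rewrite genmxE.
have [Y' [-> hF]] := hA S' hS'.
rewrite (eqmxMr _ (genmxE _)) /wb -chi_ext //.
by apply: (sumsmx_sup (delta w (ext Y'))) => //; rewrite genmxE.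
Qed.
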